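(* Fix the time-space domain, i.e. fix $T>0$ and $X>0$. If $\|e(u_t)\|_\infty=O(\Delta t)$, then $\|e(u)\|_{2,\Delta}\to 0$ as $\Delta t,\Delta x\to 0$.
   Context: The time-space domain is $[0,T]\times[0,X]^d$, sampled on a regular grid with time levels $t^n=n\Delta t$, $n=0,\dots,N$, $\Delta t=T/N$, and $M$ points per spatial dimension with spacing $\Delta x=X/(M-1)$. $u$ is the exact (smooth) solution of the true PDE and $u_t$ its exact time derivative at the grid points. $\widehat{U}$ is the numerical solution on the same grid of the identified PDE, and $D_t\widehat{U}$ its numerical time derivative computed by forward differences $(\widehat{U}^{n+1}-\widehat{U}^n)/\Delta t$. The errors are $e(u)=\widehat{U}-u$ and $e(u_t)=D_t\widehat{U}-u_t$, vectorized over all grid points; $\|\cdot\|_\infty$ is the max-norm and $\|v\|_{2,\Delta}=\sqrt{\Delta x^d\,\Delta t}\,\|v\|_2$ is the grid-dependent $L_2$ norm. *)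

(* Defs.v *)
From HB Require Import structures.
From mathcomp Require Import all_boot all_order all_algebra.
From mathcomp Require Import all_classical all_reals all_analysis.
Set Implicit Arguments. Unset Strict Implicit. Unset Printing Implicit Defensive.
Import Order.TTheory GRing.Theory Num.Theory.
Import numFieldNormedType.Exports.
Local Open Scope classical_set_scope.
Local Open Scope ring_scope.

Section Grid.
Variables (R : realType) (d : nat).

Definition dt (T : R) (N : nat) : R := T / N%:R.
Definition dx (X : R) (M : nat) : R := X / (M.-1)%:R.

(* spatial grid point with multi-index j (j i in 0..M-1) *)
Definition gridpt (X : R) (M : nat) (j : 'I_d -> nat) : 'rV[R]_d :=
  \row_i ((j i)%:R * dx X M).

Definition domain (T X : R) : set (R * 'rV[R]_d) :=
  [set p : R * 'rV[R]_d | 0 <= p.1 <= T /\ forall i : 'I_d, 0 <= p.2 ord0 i <= X].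

(* A family of numerical solutions: Uhat N M n j is the value at time level
   n and spatial multi-index j on the grid with parameters (N, M). *)
Variables (u ut : R -> 'rV[R]_d -> R)
          (Uhat : nat -> nat -> nat -> ('I_d -> nat) -> R)
          (T X : R).

Definition err_u (N M n : nat) (j : 'I_d -> nat) : R :=
  Uhat N M n j - u (n%:R * dt T N) (gridpt X M j).

Definition err_ut (N M n : nat) (j : 'I_d -> nat) : R :=
  (Uhat N M n.+1 j - Uhat N M n j) / dt T N
  - ut (n%:R * dt T N) (gridpt X M j).

(* || e(u_t) ||_infty over all grid points where D_t Uhat is defined *)
Definition sup_err_ut (N M : nat) : R :=
  \big[Num.max/0]_(n < N)
    \big[Num.max/0]_(j : {ffun 'I_d -> 'I_M})
      `|err_ut N M n (fun i => nat_of_ord (j i))|.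

Definition l2D_err_u (N M : nat) : R :=
  Num.sqrt (dx X M ^+ d * dt T N *
    \sum_(n < N.+1) \sum_(j : {ffun 'I_d -> 'I_M})
       (err_u N M n (fun i => nat_of_ord (j i))) ^+ 2).

End Grid.

(* Main.v *)
Require Import Defs.
From HB Require Import structures.
From mathcomp Require Import all_boot all_order all_algebra.
From mathcomp Require Import all_classical all_reals all_analysis.
From mathcomp Require Import ring lra zify.
Import Order.TTheory GRing.Theory Num.Theory.
Import numFieldNormedType.Exports.
Local Open Scope classical_set_scope.
Local Open Scope ring_scope.

Lemma domain_compact (R : realType) (d : nat) (T X : R) : compact (@domain R d T X).
Proof.
have -> : @domain R d T X = `[0, T]%classic `*` [set v : 'rV[R]_d | forall i, `[0, X]%classic (v ord0 i)].
  apply/seteqP; split => -[t v] /=; rewrite /domain /= ?in_itv /=.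
    by move=> [-> H]; split => // i; rewrite /= in_itv /= H.
  by move=> [-> H]; split => // i; have := H i; rewrite /= in_itv.
apply: compact_setX; first exact: segment_compact.
have := @rV_compact R d (fun=> `[0, X]%classic) (fun=> @segment_compact R 0 X).
move=> H; exact: H.
Qed.

Lemma unif_cont (R : realType) (d : nat) (T X : R) (ut : R -> 'rV[R]_d -> R) :
  {within @domain R d T X, continuous (fun p : R * 'rV[R]_d => ut p.1 p.2)} ->
  forall eta : R, 0 < eta -> exists2 delta : R, 0 < delta &
    forall t s x, @domain R d T X (t, x) -> @domain R d T X (s, x) ->
      `|t - s| < delta -> `|ut t x - ut s x| < eta.
Proof.
move=> hc eta eta0.
set K := @domain R d T X.
pose P := fun (del : R) (q : R * 'rV[R]_d) => forall p : R * 'rV[R]_d, K p ->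
   `|p.1 - q.1| < del -> p.2 = q.2 -> `|ut p.1 p.2 - ut q.1 q.2| < eta.
have cov : \forall del \near (0:R)^'+, K `<=` P del.
  have := @domain_compact R d T X; rewrite compact_near_coveringP -near_covering_withinP.
  apply => // x Kx.
  have [r r0 Hr] : exists2 r : R, 0 < r & forall p, K p -> ball x r p ->
      `|ut x.1 x.2 - ut p.1 p.2| < eta / 2.
    have := hc x => /cvgrPdist_lt /(_ (eta / 2)).
    move=> /(_ ltac:(by rewrite divr_gt0)) H.
    have : within K (nbhs x) (fun p => `|ut x.1 x.2 - ut p.1 p.2| < eta / 2).
      by rewrite (nbhs_subspace_in Kx); exact: H.
    by move=> /nbhs_ballP [r r0 Hr]; exists r => // p Kp bp; exact: Hr bp Kp.
  exists (ball x (r / 2), [set e : R | 0 < e < r / 2]); first split.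
  - by apply/nbhs_ballP; exists (r / 2) => //=; rewrite divr_gt0.
  - rewrite /=; near=> e; apply/andP; split; near: e; first exact: nbhs_right_gt.
    by apply: nbhs_right_lt; rewrite divr_gt0.
  move=> [x' del] [/= bx' /andP[del0 delr]] Kx' p Kp h1 h2.
  have bp : ball x r p.
    rewrite [r](splitr r); apply: (ball_triangle bx'); split => /=.
    - by rewrite /ball /= distrC (lt_trans h1 delr).
    - by rewrite h2; apply: ballxx; rewrite divr_gt0.
  have bx'' : ball x r x'.
    by apply: le_ball bx'; rewrite ler_pdivrMr // ler_peMr ?ler1n // ltW.
  have H1 := Hr p Kp bp; have H2 := Hr x' Kx' bx''.
  have -> : ut p.1 p.2 - ut x'.1 x'.2 = (ut x.1 x.2 - ut x'.1 x'.2) - (ut x.1 x.2 - ut p.1 p.2) by ring.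
  apply: (le_lt_trans (ler_normB _ _)); rewrite [eta](splitr eta).
  exact: ltrD.
near (0:R)^'+ => del.
exists del; first by near: del; exact: nbhs_right_gt.
move=> t s x Kt Ks ts.
have := (_ : K `<=` P del) (s, x) Ks (t, x) Kt ts erefl; apply.
by near: del.
Unshelve. all: by end_near.
Qed.

Lemma grid_dom (R : realType) (d : nat) (T X : R) (M : nat) (j : 'I_d -> nat) (t : R) :
  0 < X -> (1 < M)%N -> (forall i, (j i < M)%N) -> 0 <= t <= T ->
  @domain R d T X (t, gridpt X M j).
Proof.
move=> X0 M1 hj ht; split => // i /=; rewrite mxE /dx.
have M0 : 0 < (M.-1)%:R :> R by rewrite ltr0n; lia.
apply/andP; split; first by rewrite mulr_ge0 // divr_ge0 // ltW.
rewrite mulrA ler_pdivrMr // mulrC; apply: ler_wpM2l; first exact: ltW.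
rewrite ler_nat.
have := hj i; lia.
Qed.
Theorem corollary1 (R : realType) (d : nat) (T X : R)
  (u ut : R -> 'rV[R]_d -> R)
  (Uhat : nat -> nat -> nat -> ('I_d -> nat) -> R) :
  0 < T -> 0 < X ->
  (forall t x, (t, x) \in domain T X -> is_derive t 1 (fun s => u s x) (ut t x)) ->
  {within domain T X, continuous (fun p : R * 'rV[R]_d => ut p.1 p.2)} ->
  (forall N M (j : 'I_d -> nat), (forall i, (j i < M)%N) ->
     Uhat N M 0%N j = u 0 (gridpt X M j)) ->
  (exists C delta, 0 < delta /\
     forall N M : nat, (0 < N)%N -> (1 < M)%N ->
       dt T N < delta -> dx X M < delta ->
       sup_err_ut ut Uhat T X N M <= C * dt T N) ->
  forall eps : R, 0 < eps -> exists delta, 0 < delta /\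
     forall N M : nat, (0 < N)%N -> (1 < M)%N ->
       dt T N < delta -> dx X M < delta ->
       l2D_err_u u Uhat T X N M < eps.
Proof.
move=> T0 X0 hder hcont h0 [C [delta0 [d0 HC]]] eps eps0.
set K := (2 * X) ^+ d * (2 * T).
have K0 : 0 < K by rewrite mulr_gt0 // ?exprn_gt0 // mulr_gt0.
set B := Num.min 1 (eps ^+ 2 / (2 * K)).
have B0 : 0 < B by rewrite lt_min ltr01 /= divr_gt0 // ?exprn_gt0 // mulr_gt0.
have B1 : B <= 1 by rewrite ge_min lexx.
have BK : B <= eps ^+ 2 / (2 * K) by rewrite ge_min lexx orbT.
set eta0 := B / (2 * T).
have eta00 : 0 < eta0 by rewrite divr_gt0 // mulr_gt0.
have [d1 d10 Hd1] := @unif_cont R d T X ut hcont eta0 eta00.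
have C1 : 0 < `|C| + 1 by rewrite ltr_wpDl.
set d2 := B / (2 * T * (`|C| + 1)).
have d20 : 0 < d2 by rewrite divr_gt0 // !mulr_gt0.
exists (Num.min delta0 (Num.min d1 d2)); split.
  by rewrite !lt_min d0 d10 d20.
move=> N M N0 M1 hN hM.
move: hN hM; rewrite !lt_min => /and3P[hN0 hN1 hN2] /and3P[hM0 _ _].
set h := dt T N.
have N0' : N%:R != 0 :> R by rewrite pnatr_eq0 -lt0n.
have h0' : 0 < h by rewrite /h /dt divr_gt0 // ltr0n.
have Nh : N%:R * h = T by rewrite /h /dt mulrC divfK.
have Hsup := HC N M N0 M1 hN0 hM0.
have errle : forall (n : 'I_N) (jf : {ffun 'I_d -> 'I_M}),
    `|err_ut ut Uhat T X N M n (fun i => nat_of_ord (jf i))| <= sup_err_ut ut Uhat T X N M.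
  move=> n jf; rewrite /sup_err_ut.
  apply: le_trans (le_bigmax _ _ n).
  exact: (le_bigmax _ (fun jf : {ffun 'I_d -> 'I_M} => `|err_ut ut Uhat T X N M n (fun i => nat_of_ord (jf i))|) jf).
have jf0 : {ffun 'I_d -> 'I_M} := [ffun=> Ordinal (ltnW M1)].
have Ch0 : 0 <= C * h.
  exact: le_trans (normr_ge0 _) (le_trans (errle (Ordinal N0) jf0) Hsup).
have ebound : forall (jf : {ffun 'I_d -> 'I_M}) n, (n <= N)%N ->
   `|err_u u Uhat T X N M n (fun i => nat_of_ord (jf i))| <= n%:R * h * (C * h + eta0).
  move=> jf; set j := (fun i => _).
  have hj : forall i, (j i < M)%N by move=> i; exact: ltn_ord.
  elim=> [_|n IH hn].
    by rewrite /err_u (h0 N M j hj) mul0r subrr normr0 !mul0r.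
  have hn' : (n < N)%N by [].
  have {}IH := IH (ltnW hn).
  set a := n%:R * h in IH *.
  have ha : (n.+1)%:R * h = a + h by rewrite /a -addn1 natrD mulrDl mul1r.
  set x := gridpt X M j.
  have a0 : 0 <= a by rewrite /a mulr_ge0 // ltW.
  have ahT : a + h <= T.
    by rewrite -ha -Nh; apply: ler_wpM2r; [exact: ltW | rewrite ler_nat].

  have domt : forall t, a <= t <= a + h -> domain T X (t, x).
    move=> t /andP[t1 t2]; apply: grid_dom => //.
    by rewrite (le_trans a0 t1) (le_trans t2 ahT).
  have [c cab Hmvt] : exists2 c, c \in `]a, a + h[ &
      u (a + h) x - u a x = ut c x * (a + h - a).
    apply: (@MVT R (fun s => u s x) (fun s => ut s x)); first by rewrite ltrDl.
    - move=> t tin; apply: hder; rewrite inE; apply: domt.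
      by rewrite in_itv /= in tin; case/andP: tin => t1 t2; rewrite !ltW.
    - apply: derivable_within_continuous => t tin; apply: ex_derive.
      apply: hder; rewrite inE; apply: domt.
      by rewrite in_itv /= in tin.
  have cin : a < c < a + h by rewrite in_itv /= in cab.
  case/andP: cin => ca cb.
  set E := err_ut ut Uhat T X N M n j.
  have eq : err_u u Uhat T X N M n.+1 j
      = err_u u Uhat T X N M n j + h * (E + (ut a x - ut c x)).
    rewrite /E /err_u /err_ut -/h -/a -/x ha.
    move/eqP: Hmvt; rewrite subr_eq => /eqP ->.
    have hne : h != 0 by rewrite gt_eqF.
    by field.
  rewrite eq; apply: le_trans (ler_normD _ _) _.
  rewrite normrM gtr0_norm // ha mulrDl; apply: lerD => //.
  apply: ler_wpM2l; first exact: ltW.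
  apply: le_trans (ler_normD _ _) _; apply: lerD.
    exact: le_trans (errle (Ordinal hn') jf) Hsup.
  apply: ltW; apply: Hd1; try apply: domt.
  - by rewrite lexx /= lerDl ltW.
  - by rewrite !ltW.
  rewrite distrC gtr0_norm ?subr_gt0 //.
  by apply: lt_trans hN1; rewrite ltrBlDl.
have Ch_le : C * h <= B / (2 * T).
  apply: (@le_trans _ _ (`|C| * d2)).
    apply: (@le_trans _ _ (`|C| * h)).
      by rewrite ler_pM2r // ler_norm.
    by apply: ler_wpM2l => //; exact: ltW.
  have -> : `|C| * d2 = (`|C| / (`|C| + 1)) * (B / (2 * T)).
    by rewrite /d2; field; rewrite !gt_eqF.
  apply: ler_piMl; first by apply: divr_ge0; apply: ltW; rewrite ?mulr_gt0.
  by rewrite ler_pdivrMr // mul1r lerDl.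
have eB : forall (jf : {ffun 'I_d -> 'I_M}) (n : 'I_N.+1),
    `|err_u u Uhat T X N M n (fun i => nat_of_ord (jf i))| <= B.
  move=> jf n; apply: le_trans (ebound jf n _) _; first by rewrite -ltnS.
  apply: (@le_trans _ _ (T * (C * h + eta0))).
    apply: ler_wpM2r; first by rewrite addr_ge0 // ltW.
    rewrite -Nh; apply: ler_wpM2r; first exact: ltW.
    by rewrite ler_nat -ltnS.
  apply: (@le_trans _ _ (T * (B / (2 * T) + B / (2 * T)))).
    by apply: ler_wpM2l; [exact: ltW | rewrite lerD].
  by rewrite le_eqVlt; apply/orP; left; apply/eqP; field; rewrite gt_eqF.
rewrite /l2D_err_u -/h.
set S := \sum_(n < N.+1) _.
have S_le : S <= B ^+ 2 * (M%:R) ^+ d * (N.+1)%:R.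
  apply: (@le_trans _ _ (\sum_(n < N.+1) \sum_(jf : {ffun 'I_d -> 'I_M}) B ^+ 2)).
    apply: ler_sum => n _; apply: ler_sum => jf _.
    rewrite -real_normK ?num_real //; apply: lerXn2r.
    - by rewrite nnegrE normr_ge0.
    - by rewrite nnegrE ltW.
    exact: eB.
  have cf : #|{ffun 'I_d -> 'I_M}| = (M ^ d)%N by rewrite card_ffun !card_ord.
  have inner : \sum_(jf : {ffun 'I_d -> 'I_M}) B ^+ 2 = B ^+ 2 * (M%:R) ^+ d.
    rewrite sumr_const.
    by rewrite card_ffun !card_ord -natrX mulr_natr.
  under eq_bigr do rewrite inner.
  by rewrite sumr_const card_ord mulr_natr.
have dx0 : 0 <= dx X M by rewrite /dx divr_ge0 // ltW.
have M2 : dx X M * M%:R <= 2 * X.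
  have M0 : 0 < (M.-1)%:R :> R by rewrite ltr0n; move: M1; clear; lia.
  have MM : M%:R <= 2 * (M.-1)%:R :> R by rewrite -natrM ler_nat; move: M1; clear; lia.
  rewrite /dx mulrAC ler_pdivrMr // -mulrA.
  by rewrite [X in _ <= X]mulrCA ler_pM2l.
have hT : h <= T.
  rewrite -Nh -[X in X <= _]mul1r; apply: ler_wpM2r; [exact: ltW | by rewrite ler1n].
have hNN : h * (N.+1)%:R <= 2 * T.
  rewrite -addn1 natrD mulrDr mulr1 mulrC Nh; lra.
rewrite -(gtr0_norm eps0) -sqrtr_sqr ltr_sqrt ?exprn_gt0 //.
apply: (@le_lt_trans _ _ (K * B ^+ 2)).
  apply: (@le_trans _ _ (dx X M ^+ d * h * (B ^+ 2 * (M%:R) ^+ d * (N.+1)%:R))).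
    apply: ler_wpM2l; last exact: S_le.
    by apply: mulr_ge0; [exact: exprn_ge0 | exact: ltW].
  have -> : dx X M ^+ d * h * (B ^+ 2 * (M%:R) ^+ d * (N.+1)%:R)
      = (dx X M * M%:R) ^+ d * (h * (N.+1)%:R) * B ^+ 2 :> R.
    by rewrite [in RHS]exprMn; move: (dx X M ^+ d) (M%:R ^+ d : R) => A Mp; ring.
  apply: ler_wpM2r; first exact: sqr_ge0.
  apply: ler_pM.
  - by rewrite exprn_ge0 // mulr_ge0.
  - by rewrite mulr_ge0 // ltW.
  - apply: lerXn2r; last exact: M2.
    + by rewrite nnegrE; apply: mulr_ge0 => //; exact: ler0n.
    + by rewrite nnegrE; apply: mulr_ge0 => //; exact: ltW.
  - exact: hNN.
have KB : K * B ^+ 2 <= K * B.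
  by apply: ler_wpM2l; [exact: ltW | rewrite expr2 ler_piMl // ltW].
apply: le_lt_trans KB _.
apply: (@le_lt_trans _ _ (K * (eps ^+ 2 / (2 * K)))).
  by apply: ler_wpM2l; [exact: ltW | exact: BK].
have -> : K * (eps ^+ 2 / (2 * K)) = eps ^+ 2 / 2 by field; rewrite gt_eqF.
by rewrite ltr_pdivrMr // ltr_pMr ?exprn_gt0 // ltr1n.
Qed.
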